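(* Let $H$ be a countable group and $E$ a normal subgroup of $H$. Let $H\curvearrowright X$ be a Borel action on a standard Borel space such that $E$ acts on $X$ trivially. Set $\mathcal{H}=X\rtimes H$ and $\mathcal{R}=\mathcal{R}(H/E\curvearrowright X)$, and let $q\colon\mathcal{H}\to\mathcal{R}$ be the quotient map $(x,h)\mapsto(x,h^{-1}x)$. Suppose that $\mathcal{R}$ is hyperfinite. Then the exact sequence of groupoids \[1\to X\times E\to\mathcal{H}\xrightarrow{q}\mathcal{R}\to1\] splits, i.e. there exists a Borel homomorphism $\sigma\colon\mathcal{R}\to\mathcal{H}$ which is a section of $q$.
   Context: $X\rtimes H$ is the groupoid on $X\times H$ with unit space $X$, range $(x,h)\mapsto x$, source $(x,h)\mapsto h^{-1}x$, product $(x,h)(h^{-1}x,k)=(x,hk)$. $\mathcal{R}(H/E\curvearrowright X)=\{(x,h^{-1}x):x\in X,h\in H\}$ is the orbit equivalence relation, a groupoid with $r(x,y)=x$, $s(x,y)=y$, $(x,y)(y,z)=(x,z)$. A countable Borel equivalence relation is hyperfinite if it is an increasing union of Borel equivalence relations with finite classes. *)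

(* Defs.v *)
From HB Require Import structures.
From mathcomp Require Import all_boot all_order all_algebra.
From mathcomp Require Import all_classical all_reals.
From mathcomp Require Import measure lebesgue_measure Rstruct.
Set Implicit Arguments. Unset Strict Implicit. Unset Printing Implicit Defensive.
Import Order.TTheory GRing.Theory Num.Theory.
Local Open Scope classical_set_scope.
Local Open Scope ring_scope.

(* A measurable space X is standard Borel if its sigma-algebra is the Borel
   sigma-algebra of some Polish (separable, completely metrizable) topology
   on X; we present that topology by a complete separable metric. *)
Section StdBorel.
Context {d : measure_display} (X : measurableType d).
Local Notation RR := Rdefinitions.R.

Definition is_metric (dist : X -> X -> RR) : Prop :=
  (forall x y, 0 <= dist x y) /\
  (forall x y, dist x y = 0 <-> x = y) /\
  (forall x y, dist x y = dist y x) /\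
  (forall x y z, dist x z <= dist x y + dist y z).

Definition metric_open (dist : X -> X -> RR) (U : set X) : Prop :=
  forall x, U x -> exists2 e : RR, 0 < e & [set y | dist x y < e] `<=` U.

Definition metric_complete (dist : X -> X -> RR) : Prop :=
  forall u : nat -> X,
    (forall e : RR, 0 < e -> exists N, forall m n, (N <= m)%N -> (N <= n)%N ->
        dist (u m) (u n) < e) ->
    exists x, forall e : RR, 0 < e -> exists N, forall n, (N <= n)%N ->
        dist (u n) x < e.

Definition metric_separable (dist : X -> X -> RR) : Prop :=
  exists s : nat -> X, forall x (e : RR), 0 < e -> exists n, dist x (s n) < e.

Definition standard_borel : Prop :=
  exists dist : X -> X -> RR,
    [/\ is_metric dist, metric_complete dist, metric_separable dist &
        (@measurable d X) = <<s [set U | metric_open dist U] >>].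
End StdBorel.

Local Close Scope ring_scope.
Local Open Scope group_scope.

Definition countable_group (H : groupType) : Prop :=
  exists f : H -> nat, injective f.

Definition normal_subgroup (H : groupType) (E : set H) : Prop :=
  [/\ E 1, (forall a b, E a -> E b -> E (a * b)), (forall a, E a -> E a^-1) &
      (forall a h, E a -> E (a ^ h))].

Section Action.
Context (H : groupType) {d : measure_display} (X : measurableType d).

Definition borel_action (act : H -> X -> X) : Prop :=
  [/\ (forall x, act 1 x = x),
      (forall g h x, act (g * h) x = act g (act h x)) &
      (forall h, measurable_fun setT (act h))].

(* The orbit equivalence relation R(H/E ~ X) = {(x, h^-1 x)} *)
Definition orbit_rel (act : H -> X -> X) : set (X * X) :=
  [set p | exists h : H, p.2 = act h^-1 p.1].

Definition equiv_rel_on (F : set (X * X)) : Prop :=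
  [/\ (forall x, F (x, x)), (forall x y, F (x, y) -> F (y, x)) &
      (forall x y z, F (x, y) -> F (y, z) -> F (x, z))].

Definition hyperfinite (R : set (X * X)) : Prop :=
  exists F : nat -> set (X * X),
    [/\ (forall n, equiv_rel_on (F n)),
        (forall n, measurable (F n)),
        (forall n x, finite_set [set y | F n (x, y)]),
        (forall n, F n `<=` F n.+1) &
        \bigcup_n F n = R].

Definition xh_range (a : X * H) : X := a.1.
Definition xh_source (act : H -> X -> X) (a : X * H) : X := act a.2^-1 a.1.
Definition xh_mul (a b : X * H) : X * H := (a.1, a.2 * b.2).

Definition xh_quot (act : H -> X -> X) (a : X * H) : X * X :=
  (a.1, act a.2^-1 a.1).

(* Borel measurability of a map D -> X * H, where H carries the discrete
   sigma-algebra (so X * H has the product sigma-algebra generated by the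
   rectangles B x {h}) *)
Definition borel_into_XH {T} {dT : measure_display} (D : set T)
    (f : T -> X * H) (mT : set (set T)) : Prop :=
  forall (B : set X) (h : H), measurable B ->
    mT (D `&` f @^-1` (B `*` [set h])).

Definition borel_section (act : H -> X -> X) (sigma : X * X -> X * H) : Prop :=
  let R := orbit_rel act in
  [/\ @borel_into_XH (X * X)%type d R sigma measurable,
      (forall p, R p -> xh_quot act (sigma p) = p) &
      (forall x y z, R (x, y) -> R (y, z) ->
         xh_source act (sigma (x, y)) = xh_range (sigma (y, z)) /\
         sigma (x, z) = xh_mul (sigma (x, y)) (sigma (y, z)))].
End Action.

(* Main.v *)
From HB Require Import structures.
From mathcomp Require Import all_boot all_order all_algebra.
From mathcomp Require Import all_classical all_reals.
From mathcomp Require Import measure lebesgue_measure Rstruct.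
From mathcomp Require Import lra.
Set Implicit Arguments. Unset Strict Implicit. Unset Printing Implicit Defensive.
Import Order.TTheory GRing.Theory Num.Theory.
Local Open Scope classical_set_scope.
Local Open Scope group_scope.

Require Import Defs.
Section Order.
Context (d : measure_display) (X : measurableType d).
Local Notation RR := Rdefinitions.R.
Context (dist : X -> X -> RR) (s : nat -> X) (Hmet : is_metric dist)
  (Hsep : forall x (e : RR), (0 < e)%R -> exists n, (dist x (s n) < e)%R).

Definition dd m x := dist x (s m).
Definition lex (x y : X) := exists m, (forall j, (j < m)%N -> dd j x = dd j y) /\ (dd m x < dd m y)%R.

Lemma lex_irr x : ~ lex x x.
Proof. by case=> m [_]; rewrite ltxx. Qed.

Lemma lex_trans x y z : lex x y -> lex y z -> lex x z.
Proof.
case=> m1 [e1 l1] [m2 [e2 l2]].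
case: (ltngtP m1 m2) => h.
- exists m1; split; last by rewrite -(e2 _ h).
  by move=> j hj; rewrite e1 // e2 //; apply: ltn_trans hj h.
- exists m2; split; last by rewrite (e1 _ h).
  by move=> j hj; rewrite e1 ?e2 //; apply: ltn_trans hj h.
- subst; exists m2; split; first by move=> j hj; rewrite e1 ?e2.
  exact: lt_trans l1 l2.
Qed.

Lemma dd_inj x y : (forall m, dd m x = dd m y) -> x = y.
Proof.
move=> e; case: Hmet => [d0 [deq [dsym dtri]]].
apply/deq.
have hxy := d0 x y.
case: (boolP (0 < dist x y)%R) => hp; last first.
  by apply/eqP; rewrite eq_le hxy andbT; rewrite leNgt.
have he : (0 < dist x y / 2)%R by rewrite divr_gt0.
case: (Hsep x he) => m hm.
have := dtri x (s m) y; rewrite (dsym (s m) y).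
have := e m; rewrite /dd => <-.
move=> h; exfalso; lra.
Qed.

Lemma lex_total x y : x <> y -> lex x y \/ lex y x.
Proof.
move=> nxy.
have ex : exists m, dd m x != dd m y.
  apply: contrapT => hn; apply: nxy; apply: dd_inj => m.
  by apply/eqP; apply: contrapT => /negP h; apply: hn; exists m.
case: (ex_minnP ex) => m hm hmin.
have he : forall j, (j < m)%N -> dd j x = dd j y.
  move=> j hj; apply/eqP; apply: contraTT hj => /hmin; rewrite -leqNgt //.
case/orP: (lt_total hm) => h; [left|right]; exists m; split => //.
by move=> j hj; rewrite he.
Qed.

Lemma lex_asym x y : lex x y -> lex y x -> False.
Proof. by move=> h1 h2; apply: (@lex_irr x); apply: lex_trans h1 h2. Qed.

Lemma seq_min (l : seq X) : (exists y, y \in l) ->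
  exists y, y \in l /\ forall z, z \in l -> ~ lex z y.
Proof.
elim: l => [[y]//|a t IH _].
case: (boolP (t == [::])) => [/eqP -> | tn].
  exists a; split; first by rewrite inE eqxx.
  by move=> z; rewrite inE => /eqP ->; apply: lex_irr.
have [m [mt mmin]] : exists y, y \in t /\ forall z, z \in t -> ~ lex z y.
  by apply: IH; case: t tn => // b t' _; exists b; rewrite inE eqxx.
case: (pselect (lex a m)) => ham.
  exists a; split; first by rewrite inE eqxx.
  move=> z; rewrite inE => /orP [/eqP -> | zt]; first exact: lex_irr.
  by move=> hza; apply: (mmin z zt); apply: lex_trans hza ham.
exists m; split; first by rewrite inE mt orbT.
by move=> z; rewrite inE => /orP [/eqP -> // | zt]; apply: mmin.
Qed.

Lemma finite_min (A : set X) : finite_set A -> A !=set0 ->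
  exists y, A y /\ forall z, A z -> ~ lex z y.
Proof.
case/finite_fsetP => S -> [y0 hy0].
have [y [hy hmin]] := @seq_min (finmap.enum_fset S) (ex_intro _ y0 hy0).
by exists y; split => // z hz; apply: hmin.
Qed.
End Order.

Section Constr.
Local Notation RR := Rdefinitions.R.
Context (H : groupType) (d : measure_display) (X : measurableType d) (act : H -> X -> X).
Context (fH : H -> nat) (fH_inj : injective fH).
Context (dist : X -> X -> RR) (s : nat -> X) (Hmet : is_metric dist)
  (Hsep : forall x (e : RR), (0 < e)%R -> exists n, (dist x (s n) < e)%R).
Context (act1 : forall x, act 1 x = x)
  (actM : forall g h x, act (g * h) x = act g (act h x)).
Context (F : nat -> set (X * X)) (Feq : forall n, equiv_rel_on (F n))
  (Ffin : forall n x, finite_set [set y | F n (x, y)])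
  (Fmono : forall n, F n `<=` F n.+1) (FU : \bigcup_n F n = orbit_rel act).

Local Notation lexX := (lex dist s).

Lemma FR n p : F n p -> orbit_rel act p.
Proof. by move=> h; rewrite -FU; exists n. Qed.

Lemma RF p : orbit_rel act p -> exists n, F n p.
Proof. by rewrite -FU => -[n _ h]; exists n. Qed.

Lemma Fle n m : (n <= m)%N -> F n `<=` F m.
Proof.
move=> /subnK <-; elim: (m - n) => // k IH.
by move=> p hp; rewrite addSn; apply: Fmono; apply: IH.
Qed.

Lemma Frefl n x : F n (x, x). Proof. by case: (Feq n). Qed.
Lemma Fsym n x y : F n (x, y) -> F n (y, x). Proof. by case: (Feq n) => _ h _; apply: h. Qed.
Lemma Ftrans n x y z : F n (x, y) -> F n (y, z) -> F n (x, z).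
Proof. by case: (Feq n) => _ _ h; apply: h. Qed.

Definition ismin n x y := F n (x, y) /\ forall z, F n (x, z) -> ~ lexX z y.

Lemma ismin_ex n x : exists y, ismin n x y.
Proof.
have [y [h1 h2]] := @finite_min d X dist s _ (Ffin n x) (ex_intro _ x (Frefl n x)).
by exists y; split.
Qed.

Lemma ismin_uniq n x u v : ismin n x u -> ismin n x v -> u = v.
Proof.
move=> [hu mu] [hv mv]; case: (pselect (u = v)) => // nuv.
by case: (lex_total Hmet Hsep nuv) => h; [case: (mv u hu)|case: (mu v hv)].
Qed.

Definition root n x := xget x (ismin n x).

Lemma rootP n x : ismin n x (root n x).
Proof. by apply: xgetPex; exact: ismin_ex. Qed.

Lemma ismin_shift n x y v : F n (x, y) -> ismin n y v -> ismin n x v.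
Proof.
move=> hxy [hv mv]; split; first exact: Ftrans hxy hv.
by move=> z hz; apply: mv; apply: Ftrans (Fsym hxy) hz.
Qed.

Lemma root_eq n x y : F n (x, y) -> root n x = root n y.
Proof. by move=> h; apply: (ismin_uniq (rootP n x)); apply: ismin_shift h (rootP n y). Qed.

Lemma orbit_ex p : orbit_rel act p -> exists g, act g p.1 = p.2.
Proof. by case=> h ->; exists h^-1. Qed.

Definition Gprop u v g := act g u = v /\ forall k, act k u = v -> (fH g <= fH k)%N.
Definition Gsel u v := xget 1 (Gprop u v).

Lemma Gsel_ex u v : (exists g, act g u = v) -> exists g, Gprop u v g.
Proof.
move=> [g0 hg0].
pose P m := `[< exists g, fH g = m /\ act g u = v >].
have ex : exists m, P m by exists (fH g0); apply/asboolP; exists g0.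
case: (ex_minnP ex) => m /asboolP [g [hg1 hg2]] hmin.
exists g; split => // k hk; rewrite hg1; apply: hmin; apply/asboolP; by exists k.
Qed.

Lemma GselP u v : (exists g, act g u = v) -> Gprop u v (Gsel u v).
Proof. by move=> h; apply: xgetPex; exact: Gsel_ex. Qed.

Lemma Gsel_eq u v a : (exists g, act g u = v) -> (Gsel u v = a <-> Gprop u v a).
Proof.
move=> h; split => [<-|[ha1 ha2]]; first exact: GselP.
have [hg1 hg2] := GselP h.
apply: fH_inj; apply/eqP; rewrite eqn_leq hg2 // ha2 //.
Qed.

Lemma ex0 x : exists g, act g x = root 0 x.
Proof. by have [h _] := rootP 0 x; apply: (orbit_ex (FR h)). Qed.

Lemma exS n x : exists g, act g (root n x) = root n.+1 x.
Proof.
have [h1 _] := rootP n x; have [h2 _] := rootP n.+1 x.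
have h3 : F n.+1 (root n x, root n.+1 x).
  by apply: Ftrans (Fsym (Fmono h1)) h2.
exact: (orbit_ex (FR h3)).
Qed.

Fixpoint psi n x : H :=
  if n is m.+1 then Gsel (root m x) (root m.+1 x) * psi m x else Gsel x (root 0 x).

Lemma psiP n x : act (psi n x) x = root n x.
Proof.
elim: n => [|n IH] /=; first by case: (GselP (ex0 x)).
by rewrite actM IH; case: (GselP (exS n x)).
Qed.

Definition cc n x y := (psi n x)^-1 * psi n y.

Lemma cc_stable n m x y : F n (x, y) -> (n <= m)%N -> cc m x y = cc n x y.
Proof.
move=> h /subnK <-; elim: (m - n) => // k IH.
rewrite addSn /cc /= (root_eq (Fle (leq_addl k n) h)).
rewrite (root_eq (Fle (leqW (leq_addl k n)) h)).
by rewrite invgM -mulgA mulKg.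
Qed.

Definition cdef p := xget 1 [set h | exists n, F n p /\ h = cc n p.1 p.2].

Lemma cdefE n p : F n p -> cdef p = cc n p.1 p.2.
Proof.
move=> h.
have [m [hm ->]] : exists m, F m p /\ cdef p = cc m p.1 p.2.
  by apply: (@xgetPex _ 1 [set h | exists n, F n p /\ h = cc n p.1 p.2]); exists (cc n p.1 p.2), n.
case: p h hm => x y h hm /=.
by rewrite -(cc_stable h (leq_maxl n m)) -(cc_stable hm (leq_maxr n m)).
Qed.

Definition sigma (p : X * X) : X * H := (p.1, cdef p).

Lemma cc_act n x y : F n (x, y) -> act (cc n x y)^-1 x = y.
Proof.
move=> h; rewrite /cc invgM invgK actM psiP (root_eq h) -psiP -actM mulVg.
exact: act1.
Qed.

Lemma sigma_quot p : orbit_rel act p -> xh_quot act (sigma p) = p.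
Proof.
move=> /RF [n h]; case: p h => x y h.
by rewrite /xh_quot /sigma /= (cdefE h) /= cc_act.
Qed.

Lemma sigma_cocycle x y z : orbit_rel act (x, y) -> orbit_rel act (y, z) ->
  xh_source act (sigma (x, y)) = xh_range (sigma (y, z)) /\
  sigma (x, z) = xh_mul (sigma (x, y)) (sigma (y, z)).
Proof.
move=> /RF [n h1] /RF [m h2].
have h1' := Fle (leq_maxl n m) h1; have h2' := Fle (leq_maxr n m) h2.
have h3 := Ftrans h1' h2'.
rewrite /xh_source /xh_range /xh_mul /sigma /= (cdefE h1') (cdefE h2') (cdefE h3) /=.
split; first exact: cc_act.
by rewrite /cc mulgA mulgK.
Qed.


Section Meas.
Context (Hmeas : (@measurable d X) = <<s [set U | metric_open dist U] >>)
  (actm : forall h, measurable_fun setT (act h))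
  (Fm : forall n, measurable (F n)).

Lemma open_meas U : metric_open dist U -> measurable U.
Proof. by move=> h; rewrite Hmeas; apply: sub_sigma_algebra. Qed.

Lemma ltq_open m (q : RR) : metric_open dist [set y | (dd dist s m y < q)%R].
Proof.
case: Hmet => [d0 [deq [dsym dtri]]].
move=> y /= hy; exists (q - dist y (s m))%R; first by rewrite subr_gt0.
move=> z /= hz; rewrite /dd; have := dtri z y (s m); rewrite (dsym z y).
move: hy; rewrite /dd => hy h; lra.
Qed.

Lemma gtq_open m (q : RR) : metric_open dist [set y | (q < dd dist s m y)%R].
Proof.
case: Hmet => [d0 [deq [dsym dtri]]].
move=> y /= hy; exists (dist y (s m) - q)%R; first by rewrite subr_gt0.
move=> z /= hz; rewrite /dd; have := dtri y z (s m).
move: hy; rewrite /dd => hy h; lra.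
Qed.

Lemma pre k (A : set X) : measurable A -> measurable [set x | A (act k x)].
Proof. by move=> mA; have := actm k measurableT mA; rewrite setTI. Qed.

Lemma meas_ltf k g m :
  measurable [set x | (dd dist s m (act k x) < dd dist s m (act g x))%R].
Proof.
have -> : [set x | (dd dist s m (act k x) < dd dist s m (act g x))%R] =
  \bigcup_(q : rat) ([set x | (dd dist s m (act k x) < ratr q)%R] `&`
                     [set x | (ratr q < dd dist s m (act g x))%R]).
  apply/seteqP; split => x /=.
  - move=> h; case: (rat_in_itvoo h) => q; rewrite in_itv /= => /andP[h1 h2].
    by exists q.
  - by case=> q _ [h1 h2]; apply: lt_trans h1 h2.
apply: bigcupT_measurable_rat => q; apply: measurableI.
  exact: (pre k (open_meas (@ltq_open m (ratr q)))).
exact: (pre g (open_meas (@gtq_open m (ratr q)))).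
Qed.

Lemma meas_eqf k g m :
  measurable [set x | dd dist s m (act k x) = dd dist s m (act g x)].
Proof.
have -> : [set x | dd dist s m (act k x) = dd dist s m (act g x)] =
  ~` ([set x | (dd dist s m (act k x) < dd dist s m (act g x))%R] `|`
      [set x | (dd dist s m (act g x) < dd dist s m (act k x))%R]).
  apply/seteqP; split => x /=.
  - by move=> ->; rewrite ltxx; case.
  - move=> h; case: (ltgtP (dd dist s m (act k x)) (dd dist s m (act g x))) => // h'.
    + by case: h; left.
    + by case: h; right.
by apply: measurableC; apply: measurableU; apply: meas_ltf.
Qed.

Lemma meas_lex k g : measurable [set x | lexX (act k x) (act g x)].
Proof.
have -> : [set x | lexX (act k x) (act g x)] =
  \bigcup_m ((\bigcap_(j in [set j | (j < m)%N])
      [set x | dd dist s j (act k x) = dd dist s j (act g x)]) `&`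
     [set x | (dd dist s m (act k x) < dd dist s m (act g x))%R]).
  apply/seteqP; split => x /=.
  - by case=> m [h1 h2]; exists m => //; split => // j hj; apply: h1.
  - by case=> m _ [h1 h2]; exists m; split => // j hj; apply: h1.
apply: bigcupT_measurable => m; apply: measurableI; last exact: meas_ltf.
by apply: bigcap_measurableType => j _; apply: meas_eqf.
Qed.

Lemma cntH : countable [set: H].
Proof. by apply/countable_injP; exists fH => x y _ _; apply: fH_inj. Qed.

Lemma mbigcupH d' (T : measurableType d') (A : H -> set T) :
  (forall h, measurable (A h)) -> measurable (\bigcup_h A h).
Proof. by move=> h; apply: countable_bigcupT_measurable => //; exact: cntH. Qed.

Lemma mbigcapH d' (T : measurableType d') (A : H -> set T) :
  (forall h, measurable (A h)) -> measurable (\bigcap_h A h).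
Proof.
move=> h; rewrite -[X in measurable X]setCK setC_bigcap; apply: measurableC.
by apply: mbigcupH => k; apply: measurableC.
Qed.

Lemma mconst d' (T : measurableType d') (P : Prop) : measurable [set _ : T | P].
Proof.
case: (pselect P) => h.
  by have -> : [set _ : T | P] = setT by apply/seteqP; split.
by have -> : [set _ : T | P] = set0 by apply/seteqP; split.
Qed.

Lemma Fpre n g : measurable [set x | F n (x, act g x)].
Proof.
have := measurable_fun_pair (@measurable_id _ X setT) (actm g) measurableT (Fm n).
by rewrite setTI.
Qed.

Definition Rt n g := [set x | act g x = root n x].

Lemma meas_Rt n g : measurable (Rt n g).
Proof.
have -> : Rt n g = [set x | F n (x, act g x)] `&`
   \bigcap_k (~` [set x | F n (x, act k x)] `|` ~` [set x | lexX (act k x) (act g x)]).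
  rewrite /Rt; apply/seteqP; split => x /=.
  - move=> e; have [r1 r2] := rootP n x; split; first by rewrite e.
    move=> k _; case: (pselect (F n (x, act k x))) => hk; last by left.
    by right => /= hl; apply: (r2 _ hk); rewrite -e.
  - move=> [h1 h2]; apply: (ismin_uniq _ (rootP n x)); split => // z hz.
    have [k hk] := orbit_ex (FR hz); rewrite /= in hk; rewrite -hk.
    case: (h2 k I) => /= hc; last exact: hc.
    by exfalso; apply: hc; rewrite hk.
apply: measurableI; first exact: Fpre.
apply: mbigcapH => k; apply: measurableU; apply: measurableC; first exact: Fpre.
exact: meas_lex.
Qed.

Lemma meas_Gsel (u v : X -> X) :
  (forall x, exists g, act g (u x) = v x) ->
  (forall k, measurable [set x | act k (u x) = v x]) ->
  forall a, measurable [set x | Gsel (u x) (v x) = a].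
Proof.
move=> ex mk a.
have -> : [set x | Gsel (u x) (v x) = a] = [set x | act a (u x) = v x] `&`
   \bigcap_k (~` [set x | act k (u x) = v x] `|` [set _ | (fH a <= fH k)%N]).
  apply/seteqP; split => x /=.
  - move/(Gsel_eq a (ex x)) => [h1 h2]; split => // k _.
    by case: (pselect (act k (u x) = v x)) => hk; [right; apply: h2|left].
  - move=> [h1 h2]; apply/(Gsel_eq a (ex x)); split => // k hk.
    by case: (h2 k I).
apply: measurableI => //; apply: mbigcapH => k; apply: measurableU.
  exact: measurableC.
exact: mconst.
Qed.

Definition Ps n a := [set x | psi n x = a].

Lemma meas_Ps n a : measurable (Ps n a).
Proof.
elim: n a => [|n IH] a.
  apply: (@meas_Gsel id (root 0)) => //; [exact: ex0 | exact: meas_Rt].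
have mS : forall g, measurable [set x | act g (root n x) = root n.+1 x].
  move=> g.
  have -> : [set x | act g (root n x) = root n.+1 x] =
     \bigcup_b (Ps n b `&` Rt n.+1 (g * b)).
    apply/seteqP; split => x /=.
    - by move=> h; exists (psi n x) => //; split => //; rewrite /Rt /= actM psiP.
    - by case=> b _ [hb]; rewrite /Rt /= actM -hb psiP.
  by apply: mbigcupH => b; apply: measurableI; [apply: IH | apply: meas_Rt].
have mQ := @meas_Gsel (root n) (root n.+1) (exS n) mS.
have -> : Ps n.+1 a = \bigcup_b (Ps n b `&` [set x | Gsel (root n x) (root n.+1 x) = a * b^-1]).
  apply/seteqP; split => x /=.
  - move=> h; exists (psi n x) => //; split => //=; rewrite /Ps /= in h.
    by rewrite -h mulgK.
  - by case=> b _ [hb hg]; rewrite /Ps /= hg hb mulgVK.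
by apply: mbigcupH => b; apply: measurableI; [apply: IH | apply: mQ].
Qed.

Lemma meas_sigma (B : set X) h : measurable B ->
  measurable (orbit_rel act `&` sigma @^-1` (B `*` [set h])).
Proof.
move=> mB.
have -> : orbit_rel act `&` sigma @^-1` (B `*` [set h]) =
   \bigcup_n \bigcup_a (F n `&` ((Ps n a `&` B) `*` Ps n (a * h))).
  apply/seteqP; split => -[x y] /=.
  - move=> [hR [hB hh]]; have [n hn] := RF hR; exists n => //; exists (psi n x) => //.
    split => //; split; first by split.
    rewrite /Ps /=; rewrite -hh (cdefE hn) /cc /=; by rewrite mulVKg.
  - case=> n _ [a _ [hn [[ha hB] hb]]]; split; first exact: FR hn.
    split => //; rewrite /sigma /= (cdefE hn) /cc /=.
    by move: ha hb; rewrite /Ps /= => -> ->; rewrite mulKg.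
apply: bigcupT_measurable => n; apply: mbigcupH => a.
apply: measurableI; first exact: Fm.
by apply: measurableX; [apply: measurableI => //; exact: meas_Ps | exact: meas_Ps].
Qed.

End Meas.
End Constr.

Theorem lemma5p1 (H : groupType) (E : set H)
    (d : measure_display) (X : measurableType d) (act : H -> X -> X) :
  countable_group H ->
  normal_subgroup E ->
  standard_borel X ->
  borel_action act ->
  (forall e x, E e -> act e x = x) ->
  hyperfinite (orbit_rel act) ->
  exists sigma : X * X -> X * H, borel_section act sigma.
Proof.
move=> [fH fHinj] _ [dist [hmet _ [s hsep] hmeas]] [act1 actM actm] _
  [F [Feq Fm Ffin Fmono FU]].
exists (sigma act fH dist s F); split.
- move=> B h mB.
  exact: (meas_sigma fHinj hmet hsep actM Feq Ffin Fmono FU hmeas actm Fm h mB).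
- by move=> p hp; exact: (sigma_quot fH hmet hsep act1 actM Feq Ffin Fmono FU hp).
- by move=> x y z h1 h2; exact: (sigma_cocycle fH hmet hsep act1 actM Feq Ffin Fmono FU h1 h2).
Qed.
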